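(* Let $\Omega$ be a finite set, $V_\Omega=\mathbb{R}^\Omega$, and $V_\Upsilon,V_\Gamma\le V_\Omega$. Let $\mathcal{P}$, $\mathcal{Q}$, $\mathcal{R}$ be orthogonal decompositions of $V_\Omega$, $V_\Upsilon$, $V_\Gamma$, respectively, such that $\mathcal{Q}$ and $\mathcal{R}$ are both structure balanced in relation to $\mathcal{P}$. If $\mathbf{PQPRP}$ is symmetric for all $\mathbf{P}\in\mathcal{P}$, $\mathbf{Q}\in\mathcal{Q}$ and $\mathbf{R}\in\mathcal{R}$, then the decomposition $\mathcal{P}\vartriangleright\mathcal{Q}$ is compatible with the decomposition $\mathcal{P}\vartriangleright\mathcal{R}$, i.e. $\mathbf{BC}=\mathbf{CB}$ for all $\mathbf{B}\in\mathcal{P}\vartriangleright\mathcal{Q}$ and all $\mathbf{C}\in\mathcal{P}\vartriangleright\mathcal{R}$.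
   Context: $V_\Omega$ carries the standard inner product; all matrices are $\Omega\times\Omega$. An orthogonal decomposition of a subspace $W\le V_\Omega$ is a finite set of nonzero symmetric idempotent matrices that are mutually orthogonal and whose sum is the orthogonal projector onto $W$; zero matrices are discarded from listed decompositions. For projectors $\mathbf{A},\mathbf{B}$: $\mathbf{B}$ has first-order balance in relation to $\mathbf{A}$ if $\mathbf{BAB}=\lambda_{\mathbf{AB}}\mathbf{B}$ for a scalar $\lambda_{\mathbf{AB}}$; if $\lambda_{\mathbf{AB}}\ne0$, $\mathbf{A}\vartriangleright\mathbf{B}=\lambda_{\mathbf{AB}}^{-1}\mathbf{ABA}$. $\mathcal{B}$ is structure balanced in relation to $\mathcal{A}$ if every $\mathbf{B}\in\mathcal{B}$ has first-order balance in relation to every $\mathbf{A}\in\mathcal{A}$, and $\mathbf{B}_1\mathbf{A}\mathbf{B}_2=\mathbf{0}$ for all $\mathbf{A}\in\mathcal{A}$ and distinct $\mathbf{B}_1,\mathbf{B}_2\in\mathcal{B}$. Then $\mathbf{A}\vdash\mathcal{B}=\mathbf{A}-\sum'_{\mathbf{B}}\mathbf{A}\vartriangleright\mathbf{B}$ (sum over $\mathbf{B}$ with $\lambda_{\mathbf{AB}}\ne0$) and $\mathcal{A}\vartriangleright\mathcal{B}=\{\mathbf{A}\vartriangleright\mathbf{B}:\mathbf{A}\in\mathcal{A},\mathbf{B}\in\mathcal{B},\lambda_{\mathbf{AB}}\neq0\}\cup\{\mathbf{A}\vdash\mathcal{B}:\mathbf{A}\in\mathcal{A}\}$ (zeros discarded).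 *)

(* Defs.v *)
(* Omega = 'I_n, V_Omega = R^n with R a real field,
   matrices are 'M[R]_n. Finite sets of matrices are represented by seqs. *)
From HB Require Import structures.
From mathcomp Require Import all_boot all_order all_algebra.
From Stdlib Require Import ClassicalEpsilon.
Set Implicit Arguments. Unset Strict Implicit. Unset Printing Implicit Defensive.
Import Order.TTheory GRing.Theory Num.Theory.
Local Open Scope ring_scope.

Section Defs.
Variables (R : realFieldType) (n : nat).
Notation M := ('M[R]_n).

Definition is_orth_proj (P U : M) : Prop :=
  P^T = P /\ P *m P = P /\ (P == U)%MS.

Definition orth_decomp (D : seq M) (U : M) : Prop :=
  uniq D /\
  (forall A, A \in D -> A != 0 /\ A^T = A /\ A *m A = A) /\
  (forall A B, A \in D -> B \in D -> A != B -> A *m B = 0) /\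
  is_orth_proj (\sum_(A <- D) A) U.

Definition fo_balance (A B : M) : Prop := exists l : R, B *m A *m B = l *: B.

(* the scalar lambda_{AB} (uniquely determined when B != 0 has balance wrt A) *)
Definition lam (A B : M) : R :=
  epsilon (inhabits 0) (fun l : R => B *m A *m B = l *: B).

Definition tri (A B : M) : M := (lam A B)^-1 *: (A *m B *m A).

Definition struct_balanced (Q P : seq M) : Prop :=
  (forall B A, B \in Q -> A \in P -> fo_balance A B) /\
  (forall A B1 B2, A \in P -> B1 \in Q -> B2 \in Q -> B1 != B2 ->
     B1 *m A *m B2 = 0).

Definition vdash (A : M) (Q : seq M) : M :=
  A - \sum_(B <- Q | lam A B != 0) tri A B.

(* P |> Q, zero matrices discarded *)
Definition triset (P Q : seq M) : seq M :=
  [seq X <- [seq tri A B | A <- P, B <- [seq B <- Q | lam A B != 0]]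
            ++ [seq vdash A Q | A <- P] | X != 0].

End Defs.

(* Main.v *)
Require Import Defs.
From HB Require Import structures.
From mathcomp Require Import all_boot all_order all_algebra.
Import Order.TTheory GRing.Theory Num.Theory.
Local Open Scope ring_scope.
Set Implicit Arguments. Unset Strict Implicit.

Section Helpers.
Variables (R : realFieldType) (n : nat).
Notation M := ('M[R]_n).

Lemma comm_scale (X Y : M) (a : R) : comm_mx X Y -> comm_mx X (a *: Y).
Proof. by rewrite /comm_mx => h; rewrite -scalemxAr -scalemxAl h. Qed.

Section FixA.
Variable A : M.
Hypothesis idA : A *m A = A.

Lemma tri_l B : A *m tri A B = tri A B.
Proof. by rewrite /tri -scalemxAr !mulmxA idA. Qed.

Lemma tri_r B : tri A B *m A = tri A B.
Proof. by rewrite /tri -scalemxAl -mulmxA idA. Qed.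

Lemma vdash_l S : A *m vdash A S = vdash A S.
Proof.
rewrite /vdash mulmxBr idA mulmx_sumr; congr (_ - _).
by apply: eq_bigr => B _; rewrite tri_l.
Qed.

Lemma vdash_r S : vdash A S *m A = vdash A S.
Proof.
rewrite /vdash mulmxBl idA mulmx_suml; congr (_ - _).
by apply: eq_bigr => B _; rewrite tri_r.
Qed.

Lemma comm_A_tri B : comm_mx A (tri A B).
Proof. by rewrite /comm_mx tri_l tri_r. Qed.

Lemma comm_vdash (S : seq M) (X : M) : comm_mx X A ->
  (forall B, B \in S -> comm_mx X (tri A B)) -> comm_mx X (vdash A S).
Proof.
move=> hA hB; rewrite /vdash; apply: comm_mxB => //.
rewrite big_seq_cond; apply: comm_mx_sum => B /andP[hBS _]; exact: hB.
Qed.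
End FixA.

Lemma diffA (A A' X Y : M) : X *m A = X -> A' *m Y = Y -> A *m A' = 0 ->
  X *m Y = 0.
Proof.
by move=> hX hY h; rewrite -hX -hY mulmxA -(mulmxA X) h mulmx0 mul0mx.
Qed.

Lemma mem_triset (P Q : seq M) X : X \in triset P Q ->
  exists A, A \in P /\ ((exists B, B \in Q /\ X = tri A B) \/ X = vdash A Q).
Proof.
rewrite /triset mem_filter => /andP[_]; rewrite mem_cat => /orP[].
  case/allpairsPdep => A [B [hA hB ->]]; exists A; split => //; left.
  by exists B; move: hB; rewrite mem_filter => /andP[].
by case/mapP => A hA ->; exists A; split => //; right.
Qed.
End Helpers.

Theorem lemma2 (R : realFieldType) (n : nat) (U G : 'M[R]_n)
  (P Q Rd : seq 'M[R]_n) :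
  orth_decomp P 1%:M -> orth_decomp Q U -> orth_decomp Rd G ->
  struct_balanced Q P -> struct_balanced Rd P ->
  (forall A B C, A \in P -> B \in Q -> C \in Rd ->
     (A *m B *m A *m C *m A)^T = A *m B *m A *m C *m A) ->
  forall X Y, X \in triset P Q -> Y \in triset P Rd -> X *m Y = Y *m X.
Proof.
move=> [_ [hP [hPo _]]] [_ [hQ _]] [_ [hR _]] _ _ hsym X Y hX hY.
have [A [hA hXA]] := mem_triset hX.
have [A' [hA' hYA]] := mem_triset hY.
have [_ [tA idA]] := hP A hA.
have [_ [tA' idA']] := hP A' hA'.
have XA : X *m A = X /\ A *m X = X.
  by case: hXA => [[B [_ ->]]|->]; split;
    rewrite ?(tri_l idA) ?(tri_r idA) ?(vdash_l idA) ?(vdash_r idA).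
have YA : Y *m A' = Y /\ A' *m Y = Y.
  by case: hYA => [[B [_ ->]]|->]; split;
    rewrite ?(tri_l idA') ?(tri_r idA') ?(vdash_l idA') ?(vdash_r idA').
case: (eqVneq A A') => [eAA|nAA]; last first.
  rewrite (diffA XA.1 YA.2 (hPo _ _ hA hA' nAA)).
  have nA'A : A' != A by rewrite eq_sym.
  by rewrite (diffA YA.1 XA.2 (hPo _ _ hA' hA nA'A)).
subst A'.
have key : forall B C, B \in Q -> C \in Rd ->
    comm_mx (A *m B *m A) (A *m C *m A).
  move=> B C hB hC.
  have [_ [tB _]] := hQ B hB; have [_ [tC _]] := hR C hC.
  have e : forall Z : 'M[R]_n, Z *m A *m A = Z *m A by move=> Z; rewrite -mulmxA idA.
  rewrite /comm_mx !mulmxA !e -(hsym A B C hA hB hC).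
  by rewrite !trmx_mul tA tB tC ?mulmxA.
have tt : forall B C, B \in Q -> C \in Rd -> comm_mx (tri A B) (tri A C).
  move=> B C hB hC; rewrite /tri; apply: comm_scale.
  by apply/comm_mx_sym/comm_scale/comm_mx_sym; apply: key.
have tv : forall B, B \in Q -> comm_mx (tri A B) (vdash A Rd).
  move=> B hB; apply: comm_vdash => //; first exact/comm_mx_sym/comm_A_tri.
  by move=> C hC; apply: tt.
have vt : forall C, C \in Rd -> comm_mx (vdash A Q) (tri A C).
  move=> C hC; apply/comm_mx_sym/comm_vdash => //; first exact/comm_mx_sym/comm_A_tri.
  by move=> B hB; apply/comm_mx_sym/tt.
case: hXA => [[B [hB ->]]|->]; case: hYA => [[C [hC ->]]|->].
- exact: tt.
- exact: tv.
- exact: vt.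
apply: comm_vdash => //.
apply/comm_mx_sym/comm_vdash => // B _; exact: comm_A_tri.
Qed.
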